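(* The inequality $\lambda_s(a,b)\le H(a,b)$ holds for all $a,b>0$ if and only if $s\le -4$.
   Context: For $a,b>0$ with $a\neq b$ define $$\lambda_s(a,b)=\begin{cases}\dfrac{s-1}{s+1}\cdot\dfrac{a^{s+1}+b^{s+1}-2\left(\frac{a+b}{2}\right)^{s+1}}{a^s+b^s-2\left(\frac{a+b}{2}\right)^s}, & s\in\mathbb{R}\setminus\{-1,0,1\},\\[3mm] \dfrac{2\log\frac{a+b}{2}-\log a-\log b}{\frac{1}{2a}+\frac{1}{2b}-\frac{2}{a+b}}, & s=-1,\\[3mm] \dfrac{a\log a+b\log b-(a+b)\log\frac{a+b}{2}}{2\log\frac{a+b}{2}-\log a-\log b}, & s=0,\\[3mm] \dfrac{(b-a)^2}{4\left(a\log a+b\log b-(a+b)\log\frac{a+b}{2}\right)}, & s=1,\end{cases}$$ and $\lambda_s(a,a)=a$. The harmonic mean is $H(a,b)=2(1/a+1/b)^{-1}$. *)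

(* Defs.v *)
From Stdlib Require Import Reals.
Open Scope R_scope.

Definition lambda (s a b : R) : R :=
  if Req_EM_T a b then a
  else
  let m := (a + b) / 2 in
  if Req_EM_T s (-1) then
    (2 * ln m - ln a - ln b) / (1 / (2 * a) + 1 / (2 * b) - 2 / (a + b))
  else if Req_EM_T s 0 then
    (a * ln a + b * ln b - (a + b) * ln m) / (2 * ln m - ln a - ln b)
  else if Req_EM_T s 1 then
    (b - a) ^ 2 / (4 * (a * ln a + b * ln b - (a + b) * ln m))
  else
    (s - 1) / (s + 1) *
    ((Rpower a (s + 1) + Rpower b (s + 1) - 2 * Rpower m (s + 1)) /
     (Rpower a s + Rpower b s - 2 * Rpower m s)).

Definition harmonic (a b : R) : R := 2 / (1 / a + 1 / b).

(* Main.v *)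
Require Import Defs.
From Stdlib Require Import Reals Lra Psatz.
From Coquelicot Require Import Coquelicot.
Open Scope R_scope.

Lemma mono_ge0 (F F' : R -> R) (T : R) :
  (forall x, 0 <= x < T -> is_derive F x (F' x)) ->
  (forall x, 0 <= x < T -> 0 <= F' x) -> F 0 = 0 ->
  forall x, 0 <= x < T -> 0 <= F x.
Proof.
  intros HD HP H0 x Hx.
  destruct (Req_dec x 0) as [->|Hx0]; [lra|].
  destruct (MVT_cor2 F F' 0 x) as [c [Hc1 Hc2]]; [lra| |].
  - intros c Hc. apply is_derive_Reals. apply HD. lra.
  - assert (0 <= F' c) by (apply HP; lra). nra.
Qed.

Lemma mono_gt0 (F F' : R -> R) (T : R) :
  (forall x, 0 <= x < T -> is_derive F x (F' x)) ->
  (forall x, 0 < x < T -> 0 < F' x) -> F 0 = 0 ->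
  forall x, 0 < x < T -> 0 < F x.
Proof.
  intros HD HP H0 x Hx.
  destruct (MVT_cor2 F F' 0 x) as [c [Hc1 Hc2]]; [lra| |].
  - intros c Hc. apply is_derive_Reals. apply HD. lra.
  - assert (0 < F' c) by (apply HP; lra). nra.
Qed.

Definition U (s t : R) := exp (s * ln (1 + t)).
Definition V (s t : R) := exp (s * ln (1 - t)).

Definition G (s t : R) :=
  (1 - t^2) * (U s t + V s t - 2)
  - (s - 1) / (s + 1) * ((1 + t) * U s t + (1 - t) * V s t - 2).
Definition h (s t : R) :=
  U s t * (1 - (s + 2) * t) - V s t * (1 + (s + 2) * t) + 4 * t.
Definition h1 (s t : R) :=
  U s t / (1 + t) * (-2 - (s+1)*(s+2) * t)
  + V s t / (1 - t) * (-2 + (s+1)*(s+2) * t) + 4.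
Definition h2 (s t : R) :=
  - (U s t / (1 + t)^2) * (s*(s+5) + (s+1)*(s+2)*s * t)
  + V s t / (1 - t)^2 * (s*(s+5) - (s+1)*(s+2)*s * t).

Lemma dG s t : s <> -1 -> -1 < t < 1 -> is_derive (G s) t (h s t).
Proof.
  intros Hs Ht. unfold G, h, U, V. auto_derive.
  - lra.
  - replace (1 + - t) with (1 - t) by ring. field. lra.
Qed.
Lemma dh s t : -1 < t < 1 -> is_derive (h s) t (h1 s t).
Proof.
  intros Ht. unfold h, h1, U, V. auto_derive.
  - lra.
  - replace (1 + - t) with (1 - t) by ring. field. lra.
Qed.
Lemma dh1 s t : -1 < t < 1 -> is_derive (h1 s) t (h2 s t).
Proof.
  intros Ht. unfold h2, h1, U, V. auto_derive.
  - lra.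
  - replace (1 + - t) with (1 - t) by ring. field. lra.
Qed.

Lemma exp_le' x y : x <= y -> exp x <= exp y.
Proof. intros [H|H]; [left; apply exp_increasing; exact H| subst; lra]. Qed.

Lemma ln_le' x y : 0 < x -> x <= y -> ln x <= ln y.
Proof. intros Hx [H|H]; [left; apply ln_increasing; lra| subst; lra]. Qed.

Lemma U0 s : U s 0 = 1.
Proof. unfold U. rewrite Rplus_0_r, ln_1, Rmult_0_r, exp_0. reflexivity. Qed.
Lemma V0 s : V s 0 = 1.
Proof. unfold V. rewrite Rminus_0_r, ln_1, Rmult_0_r, exp_0. reflexivity. Qed.

Lemma G0 s : G s 0 = 0.
Proof. unfold G. rewrite U0, V0. ring. Qed.
Lemma h0 s : h s 0 = 0.
Proof. unfold h. rewrite U0, V0. ring. Qed.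
Lemma h10 s : h1 s 0 = 0.
Proof. unfold h1. rewrite U0, V0. field. Qed.
Lemma h20 s : h2 s 0 = 0.
Proof. unfold h2. rewrite U0, V0. field. Qed.

Lemma exp_shift2 e x : 0 < x -> exp (e * ln x) = exp ((e - 2) * ln x) * x ^ 2.
Proof.
  intros Hx. replace (e * ln x) with ((e-2) * ln x + ln x + ln x) by ring.
  rewrite !exp_plus, exp_ln by exact Hx. ring.
Qed.

Lemma atanh_ineq n t : 1 <= n -> 0 <= t -> n * t < 1 ->
  n * (ln (1 + t) - ln (1 - t)) <= ln (1 + n * t) - ln (1 - n * t).
Proof.
  intros Hn Ht Hnt.
  set (F := fun x => ln (1 + n * x) - ln (1 - n * x) - n * (ln (1 + x) - ln (1 - x))).
  set (F' := fun x => n / (1 + n * x) + n / (1 - n * x) - (n / (1 + x) + n / (1 - x))).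
  assert (Hinv : 0 < / n) by (apply Rinv_0_lt_compat; lra).
  assert (HF : forall x, 0 <= x < / n -> 0 <= F x).
  { apply (mono_ge0 F F').
    - intros x Hx. assert (Hx1 : n * x < 1).
      { assert (n * / n = 1) by (field; lra). nra. }
      assert (x <= n * x) by nra.
      unfold F, F'. auto_derive.
      + repeat split; lra.
      + replace (1 + - x) with (1 - x) by ring.
        replace (1 + - (n * x)) with (1 - n * x) by ring. field. lra.
    - intros x Hx. assert (Hx1 : n * x < 1).
      { assert (n * / n = 1) by (field; lra). nra. }
      assert (x <= n * x) by nra.
      unfold F'.
      replace (n / (1 + n * x) + n / (1 - n * x) - (n / (1 + x) + n / (1 - x)))
        with ((2 * n * x^2 * (n^2 - 1)) * / ((1 - n*x) * (1 + n*x) * (1 - x) * (1 + x)))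
        by (field; repeat split; lra).
      apply Rmult_le_pos.
      + assert (0 <= n^2 - 1) by nra. assert (0 <= x^2) by nra.
        apply Rmult_le_pos; [|lra]. apply Rmult_le_pos; lra.
      + left. apply Rinv_0_lt_compat.
        repeat apply Rmult_lt_0_compat; lra.
    - unfold F. rewrite !Rmult_0_r, Rplus_0_r, Rminus_0_r, ln_1. ring. }
  assert (Ht' : t < / n).
  { apply (Rmult_lt_reg_l n); [lra|]. rewrite Rinv_r; lra. }
  specialize (HF t (conj Ht Ht')). unfold F in HF. lra.
Qed.

Lemma h2_nonneg s t : s <= -4 -> 0 <= t < 1 -> 0 <= h2 s t.
Proof.
  intros Hs Ht.
  assert (Hp : 0 < 1 + t) by lra. assert (Hm : 0 < 1 - t) by lra.
  set (n := 2 - s).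
  set (a := exp ((s - 2) * ln (1 + t))).
  set (b := exp ((s - 2) * ln (1 - t))).
  assert (Ha : U s t / (1 + t)^2 = a).
  { unfold U, a. rewrite (exp_shift2 s (1+t)) by lra. field. lra. }
  assert (Hb : V s t / (1 - t)^2 = b).
  { unfold V, b. rewrite (exp_shift2 s (1-t)) by lra. field. lra. }
  unfold h2. rewrite Ha, Hb.
  assert (Ha0 : 0 < a) by apply exp_pos.
  assert (Hb0 : 0 < b) by apply exp_pos.
  assert (Hlab : ln (1 - t) <= ln (1 + t)) by (apply ln_le'; lra).
  assert (Hab : a <= b).
  { unfold a, b. apply exp_le'. nra. }
  set (K := s * (s + 5)).
  set (rho := - ((s + 1) * (s + 2) * s)).
  assert (Hrho : 0 <= rho).
  { unfold rho. assert (0 < (s+1)*(s+2)) by nra. nra. }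
  replace ((s + 1) * (s + 2) * s * t) with (- (rho * t)) by (unfold rho; ring).
  set (A := K - - (rho * t)). set (B := K + - (rho * t)).
  assert (HAB : B <= A) by (unfold A, B; nra).
  destruct (Rle_or_lt 0 B) as [HB|HB].
  { nra. }
  destruct (Rle_or_lt 0 A) as [HA|HA].
  { nra. }
  assert (Hkey : 0 <= rho - n * (- K)).
  { unfold rho, n, K.
    replace (- ((s + 1) * (s + 2) * s) - (2 - s) * - (s * (s + 5)))
      with ((-2 * s) * ((s + 4) * (s - 1))) by ring.
    apply Rmult_le_pos; nra. }
  assert (HK : 0 < - K) by (unfold A in HA; nra).
  assert (Hn : 6 <= n) by (unfold n; lra).
  assert (Hnt : n * t < 1).
  { unfold A in HA. nra. }
  assert (Hat := atanh_ineq n t ltac:(lra) ltac:(lra) Hnt).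
  assert (Hnt1 : 0 < 1 - n * t) by lra.
  assert (Hnt2 : 0 < 1 + n * t) by nra.
  assert (Hc : b * (1 - n * t) <= a * (1 + n * t)).
  { unfold a, b.
    rewrite <- (exp_ln (1 - n*t)) by lra.
    rewrite <- (exp_ln (1 + n*t)) by lra.
    rewrite <- !exp_plus. apply exp_le'.
    replace (s - 2) with (- n) by (unfold n; ring). nra. }
  assert (Hpoly : (1 + n * t) * (- A) <= (1 - n * t) * (- B)).
  { unfold A, B. nra. }
  assert (H1 : b * (1 + n * t) * (- A) <= a * (1 + n * t) * (- B)).
  { apply Rle_trans with (b * ((1 - n * t) * (- B))).
    - rewrite Rmult_assoc. apply Rmult_le_compat_l; lra.
    - replace (b * ((1 - n * t) * - B)) with ((b * (1 - n * t)) * - B) by ring.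
      apply Rmult_le_compat_r; lra. }
  assert (H2 : b * (- A) <= a * (- B)).
  { apply (Rmult_le_reg_r (1 + n * t)); [lra|]. nra. }
  nra.
Qed.

Lemma G_nonneg s t : s <= -4 -> 0 <= t < 1 -> 0 <= G s t.
Proof.
  intros Hs Ht.
  assert (Hh1 : forall x, 0 <= x < 1 -> 0 <= h1 s x).
  { apply (mono_ge0 (h1 s) (h2 s) 1).
    - intros x Hx. apply dh1. lra.
    - intros x Hx. apply h2_nonneg; lra.
    - apply h10. }
  assert (Hh : forall x, 0 <= x < 1 -> 0 <= h s x).
  { apply (mono_ge0 (h s) (h1 s) 1).
    - intros x Hx. apply dh. lra.
    - exact Hh1.
    - apply h0. }
  apply (mono_ge0 (G s) (h s) 1); auto.
  - intros x Hx. apply dG; lra.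
  - apply G0.
Qed.

Lemma exp_shift1 e x : 0 < x -> exp (e * ln x) = exp ((e - 1) * ln x) * x.
Proof.
  intros Hx. replace (e * ln x) with ((e-1) * ln x + ln x) by ring.
  rewrite exp_plus, exp_ln by exact Hx. ring.
Qed.

Definition f0 s t := U s t + V s t - 2.

Lemma df0 s x : -1 < x < 1 -> is_derive (f0 s) x (s * U s x / (1 + x) - s * V s x / (1 - x)).
Proof.
  intros Hx. unfold f0, U, V. auto_derive.
  - lra.
  - replace (1 + - x) with (1 - x) by ring. field. lra.
Qed.

Lemma df0_eq s x : -1 < x < 1 ->
  s * U s x / (1 + x) - s * V s x / (1 - x)
  = s * (exp ((s - 1) * ln (1 + x)) - exp ((s - 1) * ln (1 - x))).
Proof.
  intros Hx. unfold U, V.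
  rewrite (exp_shift1 s (1 + x)), (exp_shift1 s (1 - x)) by lra. field. lra.
Qed.

Lemma f0_pos s t : 0 < s * (s - 1) -> 0 < t < 1 -> 0 < f0 s t.
Proof.
  intros Hs Ht.
  apply (mono_gt0 (f0 s) (fun x => s * U s x / (1 + x) - s * V s x / (1 - x)) 1); auto.
  - intros x Hx. apply df0. lra.
  - intros x Hx. rewrite df0_eq by lra.
    assert (Hl : ln (1 - x) < ln (1 + x)) by (apply ln_increasing; lra).
    destruct (Rlt_or_le 0 s) as [Hs0|Hs0].
    + assert (1 < s) by nra.
      assert (exp ((s - 1) * ln (1 - x)) < exp ((s - 1) * ln (1 + x)))
        by (apply exp_increasing; nra). nra.
    + assert (s < 0) by (destruct Hs0; [lra| subst; lra]).
      assert (exp ((s - 1) * ln (1 + x)) < exp ((s - 1) * ln (1 - x)))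
        by (apply exp_increasing; nra). nra.
  - unfold f0. rewrite U0, V0. ring.
Qed.

Lemma f0_neg s t : 0 < s < 1 -> 0 < t < 1 -> f0 s t < 0.
Proof.
  intros Hs Ht.
  enough (0 < - f0 s t) by lra.
  apply (mono_gt0 (fun x => - f0 s x) (fun x => - (s * U s x / (1 + x) - s * V s x / (1 - x))) 1); auto.
  - intros x Hx. apply (is_derive_opp (f0 s)). apply df0. lra.
  - intros x Hx. rewrite df0_eq by lra.
    assert (Hl : ln (1 - x) < ln (1 + x)) by (apply ln_increasing; lra).
    assert (exp ((s - 1) * ln (1 + x)) < exp ((s - 1) * ln (1 - x)))
      by (apply exp_increasing; nra). nra.
  - unfold f0. rewrite U0, V0. ring.
Qed.

Lemma Rpower_S x e : 0 < x -> Rpower x (e + 1) = Rpower x e * x.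
Proof. intros Hx. rewrite Rpower_plus, Rpower_1 by exact Hx. reflexivity. Qed.

Lemma core s m t : s <= -4 -> 0 < m -> 0 < t < 1 ->
  (s - 1) / (s + 1) *
  ((Rpower (m * (1 - t)) (s + 1) + Rpower (m * (1 + t)) (s + 1) - 2 * Rpower m (s + 1)) /
   (Rpower (m * (1 - t)) s + Rpower (m * (1 + t)) s - 2 * Rpower m s))
  <= harmonic (m * (1 - t)) (m * (1 + t)).
Proof.
  intros Hs Hm Ht.
  rewrite <- !Rpower_mult_distr by lra.
  rewrite !Rpower_S by lra.
  assert (HU : Rpower (1 + t) s = U s t) by reflexivity.
  assert (HV : Rpower (1 - t) s = V s t) by reflexivity.
  rewrite HU, HV.
  assert (HM : 0 < Rpower m s) by (unfold Rpower; apply exp_pos).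
  assert (Hf : 0 < f0 s t) by (apply f0_pos; [nra | lra]).
  assert (HG := G_nonneg s t Hs ltac:(lra)).
  unfold f0 in Hf. unfold G in HG. unfold harmonic.
  set (c := (s - 1) / (s + 1)) in *.
  set (f1 := (1 + t) * U s t + (1 - t) * V s t - 2) in *.
  set (M := Rpower m s) in *.
  assert (HD : 0 < M * V s t + M * U s t - 2 * M) by nra.
  replace (c * ((M * m * (V s t * (1 - t)) + M * m * (U s t * (1 + t)) - 2 * (M * m)) /
      (M * V s t + M * U s t - 2 * M)))
    with (m * (c * f1) / (U s t + V s t - 2)) by (unfold f1; field; repeat split; lra).
  replace (2 / (1 / (m * (1 - t)) + 1 / (m * (1 + t)))) with (m * (1 - t^2))
    by (field; nra).
  apply (Rmult_le_reg_r (U s t + V s t - 2)); [lra|].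
  unfold Rdiv. rewrite Rmult_assoc, Rinv_l, Rmult_1_r by lra.
  nra.
Qed.

Definition X (s a b : R) :=
  (s - 1) / (s + 1) *
  ((Rpower a (s + 1) + Rpower b (s + 1) - 2 * Rpower ((a + b) / 2) (s + 1)) /
   (Rpower a s + Rpower b s - 2 * Rpower ((a + b) / 2) s)).

Lemma X_lt s a b : s <= -4 -> 0 < a -> a < b -> X s a b <= harmonic a b.
Proof.
  intros Hs Ha Hab.
  assert (H := core s ((a + b) / 2) ((b - a) / (a + b)) Hs ltac:(lra)).
  assert (Ht : 0 < (b - a) / (a + b) < 1).
  { split.
    - apply Rdiv_lt_0_compat; lra.
    - apply (Rmult_lt_reg_r (a + b)); [lra|]. field_simplify; lra. }
  specialize (H Ht).
  replace ((a + b) / 2 * (1 - (b - a) / (a + b))) with a in H by (field; lra).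
  replace ((a + b) / 2 * (1 + (b - a) / (a + b))) with b in H by (field; lra).
  exact H.
Qed.

Lemma suff s a b : s <= -4 -> 0 < a -> 0 < b -> lambda s a b <= harmonic a b.
Proof.
  intros Hs Ha Hb. unfold lambda.
  destruct (Req_EM_T a b) as [->|Hab].
  { unfold harmonic. right. field. lra. }
  destruct (Req_EM_T s (-1)); [lra|].
  destruct (Req_EM_T s 0); [lra|].
  destruct (Req_EM_T s 1); [lra|].
  fold (X s a b).
  destruct (Rlt_or_le a b) as [Hlt|Hle].
  - apply X_lt; lra.
  - assert (X s a b = X s b a).
    { unfold X. rewrite (Rplus_comm b a).
      rewrite (Rplus_comm (Rpower b (s + 1))), (Rplus_comm (Rpower b s)). reflexivity. }
    assert (harmonic a b = harmonic b a) by (unfold harmonic; f_equal; ring).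
    rewrite H, H0. apply X_lt; lra.
Qed.

Lemma dh2_0 s : is_derive (h2 s) 0 (-4 * s * (s + 4) * (s - 1)).
Proof.
  unfold h2, U, V. auto_derive.
  - lra.
  - rewrite ?Rplus_0_r, ?Rmult_0_r, ?Rmult_0_l, ?Ropp_0, ?Rplus_0_r, ?ln_1,
      ?Rmult_0_r, ?exp_0. field.
Qed.

Lemma near0 s : let D := -4 * s * (s + 4) * (s - 1) in D <> 0 ->
  exists d, 0 < d < 1 /\ forall t, 0 < t < d -> 0 < D * h2 s t.
Proof.
  intros D HD.
  assert (Hd := dh2_0 s). apply is_derive_Reals in Hd.
  assert (HaD : 0 < Rabs D) by (apply Rabs_pos_lt; exact HD).
  destruct (Hd (Rabs D) HaD) as [delta Hdel].
  exists (Rmin delta (1/2)). split.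
  { split; [apply Rmin_pos; [apply cond_pos| lra] |].
    apply Rle_lt_trans with (1/2); [apply Rmin_r | lra]. }
  intros t Ht.
  assert (Htd : t < delta) by (apply Rlt_le_trans with (Rmin delta (1/2)); [lra | apply Rmin_l]).
  assert (Ht0 : t <> 0) by lra.
  assert (Hta : Rabs t < delta).
  { rewrite Rabs_pos_eq; [exact Htd| lra]. }
  specialize (Hdel t Ht0 Hta).
  rewrite Rplus_0_l, h20, Rminus_0_r in Hdel.
  fold D in Hdel.
  set (q := h2 s t / t) in *.
  assert (Hq : h2 s t = q * t) by (unfold q; field; lra).
  assert (0 < D * q).
  { destruct (Rlt_or_le 0 D) as [HDp|HDn].
    - rewrite (Rabs_pos_eq D) in Hdel by lra. rewrite (Rabs_pos_eq D) in HaD by lra.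
      apply Rabs_def2 in Hdel. nra.
    - rewrite (Rabs_left D) in Hdel by lra. rewrite (Rabs_left D) in HaD by lra.
      apply Rabs_def2 in Hdel. nra. }
  rewrite Hq. nra.
Qed.

Lemma chain s : s <> -1 -> let D := -4 * s * (s + 4) * (s - 1) in D <> 0 ->
  exists t, 0 < t < 1 /\ 0 < D * G s t.
Proof.
  intros Hs1 D HD.
  destruct (near0 s HD) as [d [Hd H2]].
  assert (Hh1 : forall x, 0 < x < d -> 0 < D * h1 s x).
  { apply (mono_gt0 (fun x => D * h1 s x) (fun x => D * h2 s x) d).
    - intros x Hx. apply is_derive_scal. apply dh1. lra.
    - exact H2.
    - rewrite h10. ring. }
  assert (Hh : forall x, 0 < x < d -> 0 < D * h s x).
  { apply (mono_gt0 (fun x => D * h s x) (fun x => D * h1 s x) d).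
    - intros x Hx. apply is_derive_scal. apply dh. lra.
    - exact Hh1.
    - rewrite h0. ring. }
  exists (d / 2). split; [lra|].
  apply (mono_gt0 (fun x => D * G s x) (fun x => D * h s x) d).
  - intros x Hx. apply is_derive_scal. apply dG; lra.
  - exact Hh.
  - rewrite G0. ring.
  - lra.
Qed.

Lemma Rpower_1_l e : Rpower 1 e = 1.
Proof. unfold Rpower. rewrite ln_1, Rmult_0_r, exp_0. reflexivity. Qed.

Lemma viol_gen s : -4 < s -> s <> -1 -> s <> 0 -> s <> 1 ->
  exists a b, 0 < a /\ 0 < b /\ harmonic a b < lambda s a b.
Proof.
  intros Hs4 Hs1 Hs0 Hs1'.
  assert (HD : -4 * s * (s + 4) * (s - 1) <> 0).
  { intro H. assert (s * (s - 1) * (s + 4) = 0) by lra.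
    apply Rmult_integral in H0 as [H0|H0]; [|lra].
    apply Rmult_integral in H0 as [H0|H0]; lra. }
  destruct (chain s Hs1 HD) as [t [Ht HG]].
  exists (1 - t), (1 + t). split; [lra|]. split; [lra|].
  unfold lambda.
  destruct (Req_EM_T (1 - t) (1 + t)); [lra|].
  destruct (Req_EM_T s (-1)); [lra|].
  destruct (Req_EM_T s 0); [lra|].
  destruct (Req_EM_T s 1); [lra|].
  replace ((1 - t + (1 + t)) / 2) with 1 by field.
  rewrite !Rpower_1_l, !Rpower_S by lra.
  change (Rpower (1 - t) s) with (V s t). change (Rpower (1 + t) s) with (U s t).
  unfold harmonic.
  replace (2 / (1 / (1 - t) + 1 / (1 + t))) with (1 - t^2) by (field; lra).
  assert (Hq : G s t / f0 s t < 0 /\ f0 s t <> 0).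
  { destruct (Rlt_or_le 0 (s * (s - 1))) as [Hp|Hn].
    - assert (Hf := f0_pos s t Hp Ht).
      assert (-4 * s * (s + 4) * (s - 1) < 0) by nra.
      assert (G s t < 0) by nra.
      split; [|lra].
      assert (0 < / f0 s t) by (apply Rinv_0_lt_compat; lra).
      unfold Rdiv. nra.
    - assert (Hs01 : 0 < s < 1).
      { destruct Hn as [Hn|Hn]; [|apply Rmult_integral in Hn as [Hn|Hn]; lra].
        destruct (Rlt_or_le 0 s); [nra|].
        destruct H; [nra| lra]. }
      assert (Hf := f0_neg s t Hs01 Ht).
      assert (0 < -4 * s * (s + 4) * (s - 1)) by nra.
      assert (0 < G s t) by nra.
      split; [|lra].
      assert (/ f0 s t < 0) by (apply Rinv_lt_0_compat; lra).
      unfold Rdiv. nra. }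
  destruct Hq as [Hq Hf0].
  replace ((s - 1) / (s + 1) *
     ((V s t * (1 - t) + U s t * (1 + t) - 2 * 1) / (V s t + U s t - 2 * 1)))
    with ((1 - t^2) - G s t / f0 s t).
  { lra. }
  unfold G. unfold f0 in *. field. repeat split; try lra; intro Hc; apply Hf0; lra.
Qed.

Lemma ln_lt x : 0 < x -> x <> 1 -> ln x < x - 1.
Proof.
  intros Hx H1. assert (ln x <> 0).
  { intro H. apply H1. rewrite <- (exp_ln x) by lra. rewrite H. apply exp_0. }
  assert (Hx' := exp_ineq1 (ln x) H). rewrite exp_ln in Hx' by lra. lra.
Qed.

Lemma ln_gt x : 0 < x -> x <> 1 -> 1 - 1 / x < ln x.
Proof.
  intros Hx H1.
  assert (H := ln_lt (/ x) ltac:(apply Rinv_0_lt_compat; lra)).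
  rewrite ln_Rinv in H by lra.
  assert (/ x <> 1).
  { intro Hc. apply H1. rewrite <- (Rinv_inv x), Hc. apply Rinv_1. }
  specialize (H H0). unfold Rdiv. lra.
Qed.

Lemma viol_m1 : exists a b, 0 < a /\ 0 < b /\ harmonic a b < lambda (-1) a b.
Proof.
  exists (1/2), (3/2). split; [lra|]. split; [lra|].
  unfold lambda.
  destruct (Req_EM_T (1/2) (3/2)); [lra|].
  destruct (Req_EM_T (-1) (-1)); [|lra].
  replace ((1 / 2 + 3 / 2) / 2) with 1 by field. rewrite ln_1.
  replace (1 / (2 * (1 / 2)) + 1 / (2 * (3 / 2)) - 2 / (1 / 2 + 3 / 2)) with (1/3) by field.
  assert (Hl : ln (1/2) + ln (3/2) = ln (3/4)).
  { rewrite <- ln_mult by lra. f_equal. field. }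
  assert (Hb := ln_lt (3/4) ltac:(lra) ltac:(lra)).
  unfold harmonic.
  replace (2 / (1 / (1 / 2) + 1 / (3 / 2))) with (3/4) by field.
  replace ((2 * 0 - ln (1 / 2) - ln (3 / 2)) / (1 / 3)) with (- 3 * (ln (1/2) + ln (3/2))) by field.
  lra.
Qed.

Lemma viol_1 : exists a b, 0 < a /\ 0 < b /\ harmonic a b < lambda 1 a b.
Proof.
  exists (1/10), (19/10). split; [lra|]. split; [lra|].
  unfold lambda.
  destruct (Req_EM_T (1/10) (19/10)); [lra|].
  destruct (Req_EM_T 1 (-1)); [lra|].
  destruct (Req_EM_T 1 0); [lra|].
  destruct (Req_EM_T 1 1); [|lra].
  replace ((1 / 10 + 19 / 10) / 2) with 1 by field. rewrite ln_1.
  assert (Ha1 := ln_lt (1/10) ltac:(lra) ltac:(lra)).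
  assert (Ha2 := ln_gt (1/10) ltac:(lra) ltac:(lra)).
  assert (Hb1 := ln_lt (19/10) ltac:(lra) ltac:(lra)).
  assert (Hb2 := ln_gt (19/10) ltac:(lra) ltac:(lra)).
  replace (1 - 1 / (1/10)) with (-9) in Ha2 by field.
  replace (1 - 1 / (19/10)) with (9/19) in Hb2 by field.
  set (E := 1 / 10 * ln (1 / 10) + 19 / 10 * ln (19 / 10) - (1 / 10 + 19 / 10) * 0).
  assert (HE1 : 0 < E) by (unfold E; lra).
  assert (HE2 : E < 2) by (unfold E; lra).
  unfold harmonic.
  replace (2 / (1 / (1 / 10) + 1 / (19 / 10))) with (19/100) by field.
  apply (Rmult_lt_reg_r (4 * E)); [lra|].
  replace ((19 / 10 - 1 / 10) ^ 2 / (4 * E) * (4 * E)) with ((19 / 10 - 1 / 10) ^ 2) by (field; lra).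
  lra.
Qed.

Lemma viol_0 : exists a b, 0 < a /\ 0 < b /\ harmonic a b < lambda 0 a b.
Proof.
  exists (1/4), (7/4). split; [lra|]. split; [lra|].
  unfold lambda.
  destruct (Req_EM_T (1/4) (7/4)); [lra|].
  destruct (Req_EM_T 0 (-1)); [lra|].
  destruct (Req_EM_T 0 0); [|lra].
  replace ((1 / 4 + 7 / 4) / 2) with 1 by field. rewrite ln_1.
  set (al := ln (5/4)). set (be := ln (6/5)). set (ga := ln (7/6)). set (de := ln (8/7)).
  assert (H74 : ln (7/4) = al + be + ga).
  { unfold al, be, ga. rewrite <- !ln_mult by lra. f_equal. field. }
  assert (H14 : ln (1/4) = - (2 * (al + be + ga + de))).
  { unfold al, be, ga, de.
    replace (1/4) with (/ ((5/4) * (6/5) * (7/6) * (8/7) * ((5/4) * (6/5) * (7/6) * (8/7)))) by field.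
    rewrite ln_Rinv by lra. rewrite !ln_mult by lra. ring. }
  rewrite H74, H14.
  assert (Ha1 := ln_lt (5/4) ltac:(lra) ltac:(lra)).
  assert (Ha2 := ln_gt (5/4) ltac:(lra) ltac:(lra)).
  assert (Hb1 := ln_lt (6/5) ltac:(lra) ltac:(lra)).
  assert (Hb2 := ln_gt (6/5) ltac:(lra) ltac:(lra)).
  assert (Hc1 := ln_lt (7/6) ltac:(lra) ltac:(lra)).
  assert (Hc2 := ln_gt (7/6) ltac:(lra) ltac:(lra)).
  assert (Hd1 := ln_lt (8/7) ltac:(lra) ltac:(lra)).
  assert (Hd2 := ln_gt (8/7) ltac:(lra) ltac:(lra)).
  fold al in Ha1, Ha2. fold be in Hb1, Hb2. fold ga in Hc1, Hc2. fold de in Hd1, Hd2.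
  replace (1 - 1 / (5/4)) with (1/5) in Ha2 by field.
  replace (1 - 1 / (6/5)) with (1/6) in Hb2 by field.
  replace (1 - 1 / (7/6)) with (1/7) in Hc2 by field.
  replace (1 - 1 / (8/7)) with (1/8) in Hd2 by field.
  unfold harmonic.
  replace (2 / (1 / (1 / 4) + 1 / (7 / 4))) with (7/16) by field.
  set (L := 2 * 0 - - (2 * (al + be + ga + de)) - (al + be + ga)).
  assert (HL : 0 < L) by (unfold L; lra).
  apply (Rmult_lt_reg_r L); [lra|].
  unfold Rdiv at 2. rewrite Rmult_assoc, Rinv_l, Rmult_1_r by lra.
  unfold L. lra.
Qed.

Theorem theorem3 (s : R) :
  (forall a b : R, 0 < a -> 0 < b -> lambda s a b <= harmonic a b) <-> s <= -4.
Proof.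
  split.
  - intros H. destruct (Rle_or_lt s (-4)) as [Hs|Hs]; [exact Hs|].
    exfalso.
    assert (Hv : exists a b, 0 < a /\ 0 < b /\ harmonic a b < lambda s a b).
    { destruct (Req_EM_T s (-1)) as [->|H1]; [apply viol_m1|].
      destruct (Req_EM_T s 0) as [->|H0]; [apply viol_0|].
      destruct (Req_EM_T s 1) as [->|H1']; [apply viol_1|].
      apply viol_gen; assumption. }
    destruct Hv as [a [b [Ha [Hb Hlt]]]].
    specialize (H a b Ha Hb). lra.
  - intros Hs a b Ha Hb. apply suff; assumption.
Qed.
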